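(* Let $\alpha>0$. The constraints of the optimization problem below (namely $Q>0$, $U>0$, $\Delta(Q)<0$, $\mathrm{He}\begin{bmatrix}\alpha Q+AQ+BW & B(X-U)\\ W+Y & X-U\end{bmatrix}<0$ and $\begin{bmatrix}\bar u^2 & Y\\ Y^\top & Q\end{bmatrix}\geq 0$) are feasible if and only if $\alpha>\omega$.
   Context: Let $g>0$ (gravity acceleration), $z_c>0$ (constant center-of-mass height) and $\omega:=\sqrt{g/z_c}$. Let $A:=\begin{bmatrix}0&1\\ \omega^2&0\end{bmatrix}$ and $B:=\begin{bmatrix}0\\ -\omega^2\end{bmatrix}$ (linear inverted pendulum dynamics $\dot x=Ax+Bu$). Let $\bar r>0$ (half-step size), $\bar v>0$ (peak forward speed) and $T>0$ (step period) be related by $\bar v=\omega\bar r\,\frac{\cosh(\omega T)+1}{\sinh(\omega T)}$, equivalently $T=\frac1\omega\ln\!\big(\frac{\bar v/\omega+\bar r}{\bar v/\omega-\bar r}\big)$; in particular $\bar v/\omega-\bar r>0$. Define $\xi:=\frac{\bar r\omega}{\bar v/\omega-\bar r}>0$, and let $\bar u>0$ (saturation level, half of the foot length). For $M$ square, $\mathrm{He}(M):=M+M^\top$. Consider the convex problem: maximize $\log\det(Q)$ over a symmetric $Q=\begin{bmatrix}q_{11}&q_{12}\\ q_{12}&q_{22}\end{bmatrix}\in\mathbb R^{2\times2}$, row vectors $W,Y\in\mathbb R^{1\times 2}$ and scalars $U,X\in\mathbb R$, subject to $Q>0$, $U>0$, $\Delta(Q)<0$, $\mathrm{He}\begin{bmatrix}\alpha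 Q+AQ+BW & B(X-U)\\ W+Y & X-U\end{bmatrix}<0$, $\begin{bmatrix}\bar u^2 & Y\\ Y^\top & Q\end{bmatrix}\geq0$, where $\Delta(Q):=\begin{bmatrix}\Delta_{11}&\Delta_{12}\\ \Delta_{12}&\Delta_{22}\end{bmatrix}$ with $\Delta_{11}:=(\mathrm{e}^{2(\omega-\alpha)T}-1)q_{22}+4\mathrm{e}^{-2\alpha T}\xi(\xi q_{11}-\mathrm{e}^{\omega T}q_{12})$, $\Delta_{12}:=2\mathrm{e}^{-2\alpha T}\xi q_{11}+(\mathrm{e}^{-(\omega+2\alpha)T}-1)q_{12}$, $\Delta_{22}:=(\mathrm{e}^{-2\alpha T}-1)q_{11}$. *)

(* Defs.v *)
From HB Require Import structures.
From mathcomp Require Import all_boot all_order all_algebra.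
From mathcomp Require Import reals.
From mathcomp Require Import sequences exp.
Set Implicit Arguments. Unset Strict Implicit. Unset Printing Implicit Defensive.
Import Order.TTheory GRing.Theory Num.Theory.
Local Open Scope ring_scope.

Section Defs.
Variable R : realType.

(* Definiteness of square matrices via the quadratic form x^T M x. All matrices
   to which these are applied are symmetric by construction. *)
Definition posdef n (M : 'M[R]_n) : Prop :=
  forall x : 'cV[R]_n, x != 0 -> 0 < (x^T *m M *m x) 0 0.
Definition negdef n (M : 'M[R]_n) : Prop :=
  forall x : 'cV[R]_n, x != 0 -> (x^T *m M *m x) 0 0 < 0.
Definition psd n (M : 'M[R]_n) : Prop :=
  forall x : 'cV[R]_n, 0 <= (x^T *m M *m x) 0 0.

Definition He n (M : 'M[R]_n) : 'M[R]_n := M + M^T.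

Definition mx2 (a b c d : R) : 'M[R]_2 :=
  \matrix_(i, j) if (i : nat) == 0%N then (if (j : nat) == 0%N then a else b)
                 else (if (j : nat) == 0%N then c else d).

Definition omega (g zc : R) : R := Num.sqrt (g / zc).

Definition Amat (w : R) : 'M[R]_2 := mx2 0 1 (w ^+ 2) 0.
Definition Bmat (w : R) : 'cV[R]_2 := \col_i (if (i : nat) == 0%N then 0 else - w ^+ 2).

Definition xi (w rbar vbar : R) : R := rbar * w / (vbar / w - rbar).

Definition Delta (w alpha T xi : R) (q11 q12 q22 : R) : 'M[R]_2 :=
  let d11 := (expR (2 * (w - alpha) * T) - 1) * q22
             + 4 * expR (- (2 * alpha * T)) * xi * (xi * q11 - expR (w * T) * q12) in
  let d12 := 2 * expR (- (2 * alpha * T)) * xi * q11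
             + (expR (- ((w + 2 * alpha) * T)) - 1) * q12 in
  let d22 := (expR (- (2 * alpha * T)) - 1) * q11 in
  mx2 d11 d12 d12 d22.

Definition feasible (g zc rbar vbar T ubar alpha : R) : Prop :=
  let w := omega g zc in
  let A := Amat w in
  let B := Bmat w in
  exists (q11 q12 q22 : R) (W Y : 'rV[R]_2) (U X : R),
    let Q := mx2 q11 q12 q12 q22 in
    [/\ posdef Q,
        0 < U,
        negdef (Delta w alpha T (xi w rbar vbar) q11 q12 q22),
        negdef (He (block_mx (alpha *: Q + A *m Q + B *m W) (B *m (X - U)%:M)
                             (W + Y) ((X - U)%:M : 'M[R]_1)))
      & psd (block_mx ((ubar ^+ 2)%:M : 'M[R]_1) Y Y^T Q)].

End Defs.

(* Main.v *)
Require Import Defs.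
From mathcomp Require Import all_boot all_order all_algebra.
From mathcomp Require Import reals.
From mathcomp Require Import sequences exp.
From mathcomp Require Import ring lra.
Import Order.TTheory GRing.Theory Num.Theory.
Local Open Scope ring_scope.

Section H.
Variable R : realType.

Lemma quad2 (M : 'M[R]_2) (x : 'cV[R]_2) :
  (x^T *m M *m x) 0 0 = x 0 0 * (M 0 0 * x 0 0 + M 0 1 * x 1 0)
                      + x 1 0 * (M 1 0 * x 0 0 + M 1 1 * x 1 0).
Proof.
rewrite !mxE !big_ord_recl !big_ord0 !mxE !big_ord_recl !big_ord0 !mxE.
rewrite /=. 
have e0 : (ord0 : 'I_2) = 0 by apply/val_inj.
have e1 : (lift ord0 (ord0 : 'I_1)) = 1 :> 'I_2 by apply/val_inj.
rewrite ?e0 ?e1. ring.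
Qed.

Lemma quad1 (M : 'M[R]_1) (x : 'cV[R]_1) :
  (x^T *m M *m x) 0 0 = x 0 0 * M 0 0 * x 0 0.
Proof.
rewrite !mxE !big_ord_recl !big_ord0 !mxE !big_ord_recl !big_ord0 !mxE /=.
ring.
Qed.

Lemma quad_block n1 n2 (P : 'M[R]_n1) (Bc : 'M[R]_(n1,n2)) (Rr : 'M[R]_(n2,n1)) (S : 'M[R]_n2)
  (x1 : 'cV[R]_n1) (x2 : 'cV[R]_n2) :
  ((col_mx x1 x2)^T *m block_mx P Bc Rr S *m col_mx x1 x2) 0 0 =
  (x1^T *m P *m x1) 0 0 + (x1^T *m Bc *m x2) 0 0 + (x2^T *m Rr *m x1) 0 0
  + (x2^T *m S *m x2) 0 0.
Proof.
rewrite tr_col_mx mul_row_block mul_row_col !mulmxDl !mxE.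
ring.
Qed.

Lemma quad_tr n (M : 'M[R]_n) (x : 'cV[R]_n) : (x^T *m M^T *m x) 0 0 = (x^T *m M *m x) 0 0.
Proof.
have -> : x^T *m M^T *m x = (x^T *m M *m x)^T.
  by rewrite !trmx_mul trmxK mulmxA.
by rewrite mxE.
Qed.

Lemma quad_He n (M : 'M[R]_n) (x : 'cV[R]_n) : (x^T *m He M *m x) 0 0 = 2 * (x^T *m M *m x) 0 0.
Proof.
rewrite /He mulmxDr mulmxDl mxE quad_tr; ring.
Qed.

Lemma cV2_nz (x : 'cV[R]_2) : x != 0 -> x 0 0 != 0 \/ x 1 0 != 0.
Proof.
move=> hx; case: (eqVneq (x 0 0) 0) => h0; last by left.
case: (eqVneq (x 1 0) 0) => h1; last by right.
exfalso; move/negP: hx; apply; apply/eqP/matrixP => i j; rewrite !mxE (ord1 j).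
case: i => [[|[|i]] Hi] //.
- by rewrite -h0; congr (x _ _); apply/val_inj.
- by rewrite -h1; congr (x _ _); apply/val_inj.
Qed.

Lemma cV1_nz (x : 'cV[R]_1) : x != 0 -> x 0 0 != 0.
Proof.
move=> hx; apply/negP => /eqP h; move/negP: hx; apply; apply/eqP/matrixP => i j.
by rewrite !mxE (ord1 i) (ord1 j).
Qed.

Lemma mx2E (a b c d : R) :
  [/\ mx2 a b c d 0 0 = a, mx2 a b c d 0 1 = b, mx2 a b c d 1 0 = c & mx2 a b c d 1 1 = d].
Proof. by rewrite !mxE. Qed.

Lemma negdef2 (p r t : R) : t < 0 -> r ^+ 2 < p * t -> negdef (mx2 p r r t).
Proof.
move=> ht hd x hx; rewrite quad2 !mxE /=.
set a := x 0 0; set b := x 1 0.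
have key : t * (a * (p * a + r * b) + b * (r * a + t * b)) = (t * b + r * a) ^+ 2 + (p * t - r ^+ 2) * a ^+ 2 by ring.
suff : 0 < t * (a * (p * a + r * b) + b * (r * a + t * b)) by rewrite nmulr_rgt0.
rewrite key.
case: (cV2_nz x hx) => hn.
- have ha : 0 < a ^+ 2 by rewrite exprn_even_gt0.
  apply: ltr_wpDl; first exact: sqr_ge0.
  by apply: mulr_gt0 => //; rewrite subr_gt0.
- case: (eqVneq a 0) => ha.
  + rewrite ha !(mulr0, addr0) expr0n /= mulr0 addr0 exprn_even_gt0 //.
    by rewrite mulf_neq0 // ltr0_neq0.
  + have ha2 : 0 < a ^+ 2 by rewrite exprn_even_gt0.
    apply: ltr_wpDl; first exact: sqr_ge0.
    by apply: mulr_gt0 => //; rewrite subr_gt0.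
Qed.

Lemma posdef2 (p r t : R) : 0 < p -> r ^+ 2 < p * t -> posdef (mx2 p r r t).
Proof.
move=> hp hd x hx; rewrite quad2 !mxE /=.
set a := x 0 0; set b := x 1 0.
have key : p * (a * (p * a + r * b) + b * (r * a + t * b)) = (p * a + r * b) ^+ 2 + (p * t - r ^+ 2) * b ^+ 2 by ring.
suff : 0 < p * (a * (p * a + r * b) + b * (r * a + t * b)) by rewrite pmulr_rgt0.
rewrite key.
case: (eqVneq b 0) => hb.
- case: (cV2_nz x hx) => hn; last by rewrite -/b hb eqxx in hn.
  rewrite hb !(mulr0, addr0) expr0n /= mulr0 addr0 exprn_even_gt0 //.
  by rewrite mulf_neq0 // gt_eqF.
- have hb2 : 0 < b ^+ 2 by rewrite exprn_even_gt0.
  apply: ltr_wpDl; first exact: sqr_ge0.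
  by apply: mulr_gt0 => //; rewrite subr_gt0.
Qed.
End H.

Theorem proposition2 (R : realType) (g zc rbar vbar T ubar alpha : R) :
  0 < g -> 0 < zc -> 0 < rbar -> 0 < vbar -> 0 < T -> 0 < ubar ->
  vbar = omega g zc * rbar *
         ((expR (omega g zc * T) + expR (- (omega g zc * T))) / 2 + 1) /
         ((expR (omega g zc * T) - expR (- (omega g zc * T))) / 2) ->
  0 < alpha ->
  (feasible g zc rbar vbar T ubar alpha <-> omega g zc < alpha).
Proof.
move=> hg hzc hr hv hT hu hvb ha.
have hw : 0 < omega g zc by rewrite /omega sqrtr_gt0 divr_gt0.
rewrite /feasible /=.
move: hvb; set w := omega g zc => hvb.
set E := expR (w * T).
have hE1 : 1 < E by rewrite /E expR_gt1 mulr_gt0.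
have hEi : expR (- (w * T)) = E^-1 by rewrite expRN.
rewrite hEi in hvb.
have hE0 : 0 < E by lra.
have hxi : 0 < xi w rbar vbar.
  have hS : 0 < (E - E^-1) / 2.
    have : E^-1 < 1 by rewrite invf_lt1.
    lra.
  rewrite /xi.
  have -> : vbar / w - rbar = rbar * (E^-1 + 1) / ((E - E^-1) / 2).
    rewrite hvb -/E; field.
    have hEE : 0 < E * E - 1 by nra.
    by rewrite !gt_eqF.
  apply: divr_gt0; first exact: mulr_gt0.
  apply: divr_gt0 => //; apply: mulr_gt0 => //.
  by apply: addr_gt0; rewrite ?invr_gt0.
set e1 : 'cV[R]_2 := \col_(i < 2) (if (i : nat) == 0%N then 1 else 0).
set e2 : 'cV[R]_2 := \col_(i < 2) (if (i : nat) == 0%N then 0 else 1).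
have ne1 : e1 != 0.
  by apply/negP => /eqP/matrixP/(_ 0 0); rewrite !mxE /= => /eqP; rewrite oner_eq0.
have ne2 : e2 != 0.
  by apply/negP => /eqP/matrixP/(_ 1 0); rewrite !mxE /= => /eqP; rewrite oner_eq0.
split.
  case=> q11 [q12 [q22 [W [Y [U [X [hQ hU hD hH hP]]]]]]].
  have h11 := hQ e1 ne1; rewrite quad2 !mxE /= in h11.
  have h22 := hQ e2 ne2; rewrite quad2 !mxE /= in h22.
  have hd := hD e1 ne1; rewrite /Delta /= quad2 !mxE /= in hd.
  have ne3 : col_mx e1 (0 : 'cV[R]_1) != 0 by rewrite col_mx_eq0 negb_and ne1.
  have hh := hH _ ne3; rewrite quad_He quad_block quad2 !mulmx0 trmx0 !mul0mx !mxE !big_ord_recl !big_ord0 !mxE /= in hh.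
  have hq11 : 0 < q11 by lra.
  have hq22 : 0 < q22 by lra.
  have hq12 : alpha * q11 + q12 < 0 by lra.
  rewrite ltNge; apply/negP => hle.
  have hb : 1 <= expR (2 * (w - alpha) * T).
    apply: le_trans (expR_ge1Dx _); rewrite lerDl.
    have : 0 <= w - alpha by lra.
    nra.
  have hA : 0 < expR (- (2 * alpha * T)) by apply: expR_gt0.
  set a := expR (- (2 * alpha * T)) in hA hd.
  set b := expR (2 * (w - alpha) * T) in hb hd.
  set x := xi w rbar vbar in hxi hd.
  rewrite -/E in hd.
  have t1 : 0 <= (b - 1) * q22 by apply: mulr_ge0; lra.
  have t2 : 0 < x * q11 - E * q12.
    have : 0 < x * q11 by apply: mulr_gt0.
    have : 0 < E * (- q12) by apply: mulr_gt0 => //; nra.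
    lra.
  have t3 : 0 < 4 * a * x * (x * q11 - E * q12).
    by apply: mulr_gt0 => //; apply: mulr_gt0 => //; apply: mulr_gt0.
  lra.
move=> hlt.
set a := expR (- (2 * alpha * T)).
set b := expR (2 * (w - alpha) * T).
set c := expR (- ((w + 2 * alpha) * T)).
set x := xi w rbar vbar.
have ha0 : 0 < a by apply: expR_gt0.
have hb0 : 0 < b by apply: expR_gt0.
have ha1 : a < 1 by rewrite /a expR_lt1 oppr_lt0; apply: mulr_gt0 => //; apply: mulr_gt0.
have hb1 : b < 1.
  rewrite /b expR_lt1; have : w - alpha < 0 by lra.
  nra.
pose m := alpha + 1.
pose K0 := 4 * a * x * (x - E * (- m)).
pose D12 := 2 * a * x + (c - 1) * (- m).
pose P := 1 + K0 ^+ 2 + D12 ^+ 2 / (1 - a).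
pose q := P / (1 - b) + m ^+ 2 + 1.
pose e := q + w ^+ 2 - 2 * alpha * m.
pose w2 := (- w ^+ 2 * m + alpha * q + (e ^+ 2 + 1) / 2) / w ^+ 2.
pose y := - w ^+ 2 - w2.
pose s0 := ubar ^+ 2 / (y ^+ 2 + 1).
have hs0 : 0 < s0 by apply: divr_gt0; [exact: exprn_gt0 | have := sqr_ge0 y; lra].
have hP : 0 < P.
  have : 0 <= D12 ^+ 2 / (1 - a) by apply: divr_ge0; [apply: sqr_ge0 | lra].
  have := sqr_ge0 K0; rewrite /P; lra.
have hPb : 0 <= P / (1 - b) by apply: divr_ge0; lra.
exists s0, (- (s0 * m)), (s0 * q).
exists (\row_(j < 2) if (j : nat) == 0%N then 0 else s0 * w2).
exists (\row_(j < 2) if (j : nat) == 0%N then 0 else s0 * y).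
exists 1, (1 - s0).
split => //.
- apply: posdef2 => //.
  have hq : m ^+ 2 < q by rewrite /q; lra.
  have hs2 : 0 < s0 * s0 by apply: mulr_gt0.
  have -> : (- (s0 * m)) ^+ 2 = (s0 * s0) * m ^+ 2 by ring.
  rewrite mulrA ltr_pM2l //.
- rewrite /Delta /=; apply: negdef2.
  + rewrite -/a; nra.
  + rewrite -/a -/b -/c -/E.
    have -> : (2 * a * x * s0 + (c - 1) * - (s0 * m)) ^+ 2 = s0 ^+ 2 * D12 ^+ 2.
      by rewrite /D12; ring.
    have -> : ((b - 1) * (s0 * q) + 4 * a * x * (x * s0 - E * - (s0 * m))) * ((a - 1) * s0)
        = s0 ^+ 2 * ((- ((b - 1) * q + K0)) * (1 - a)).
      by rewrite /K0; ring.
    rewrite ltr_pM2l; last exact: exprn_gt0.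
    have eq1 : (1 - b) * q = P + (1 - b) * (m ^+ 2 + 1).
      rewrite /q; field; rewrite subr_eq0 eq_sym; apply/negP => /eqP h; lra.
    set z := D12 ^+ 2 / (1 - a).
    have ez : D12 ^+ 2 = z * (1 - a).
      rewrite /z; field; rewrite subr_eq0 eq_sym; apply/negP => /eqP h; lra.
    have hK : K0 < P - z.
      have : 0 < K0 ^+ 2 - K0 + 1.
        have -> : K0 ^+ 2 - K0 + 1 = (K0 - 2^-1) ^+ 2 + 3/4 by field.
        have := sqr_ge0 (K0 - 2^-1); lra.
      rewrite /P -/z; lra.
    have hm : 0 <= (1 - b) * (m ^+ 2 + 1).
      apply: mulr_ge0; first lra.
      have := sqr_ge0 m; lra.
    rewrite ez ltr_pM2r; last lra.
    have -> : - ((b - 1) * q + K0) = (1 - b) * q - K0 by ring.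
    rewrite eq1; lra.
- move=> v hnz.
  rewrite -(vsubmxK v) col_mx_eq0 negb_and in hnz.
  rewrite -(vsubmxK v) quad_He quad_block quad2.
  move: (usubmx v) (dsubmx v) hnz => v1 v2 hnz.
  rewrite !mxE !big_ord_recl !big_ord0 !mxE !big_ord_recl !big_ord0 !mxE /=.
  rewrite ?big_ord_recl ?big_ord0 ?mxE /= ?eqxx /=.
  have i0 : (ord0 : 'I_2) = 0 by apply/val_inj.
  have i1 : (lift ord0 (ord0 : 'I_1)) = 1 :> 'I_2 by apply/val_inj.
  have i00 : (ord0 : 'I_1) = 0 by apply/val_inj.
  rewrite ?i0 ?i1 ?i00 !mulr1n.
  have hw0 : w ^+ 2 != 0 by rewrite expf_neq0 // gt_eqF.
  have key : forall A0 A1 Z : R, 0 < A0 ^+ 2 + A1 ^+ 2 + Z ^+ 2 ->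
    2 * (A0 * ((alpha * s0 + (0 * s0 + (1 * - (s0 * m) + 0)) + (0 * 0 + 0)) * A0 +
    (alpha * - (s0 * m) + (0 * - (s0 * m) + (1 * (s0 * q) + 0)) +
     (0 * (s0 * w2) + 0)) * A1) +
   A1 * ((alpha * - (s0 * m) + (w ^+ 2 * s0 + (0 * - (s0 * m) + 0)) +
     (- w ^+ 2 * 0 + 0)) * A0 +
    (alpha * (s0 * q) + (w ^+ 2 * - (s0 * m) + (0 * (s0 * q) + 0)) +
     (- w ^+ 2 * (s0 * w2) + 0)) * A1) +
   ((A0 * (0 * (1 - s0 - 1) + 0) +
     (A1 * (- w ^+ 2 * (1 - s0 - 1) + 0) + 0)) * Z + 0) +
   ((Z * (0 + 0) + 0) * A0 +
    ((Z * (s0 * w2 + s0 * y) + 0) * A1 + 0)) +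
   ((Z * (1 - s0 - 1) + 0) * Z + 0)) < 0.
    move=> A0 A1 Z hpos.
    have -> : 2 * (A0 * ((alpha * s0 + (0 * s0 + (1 * - (s0 * m) + 0)) + (0 * 0 + 0)) * A0 +
    (alpha * - (s0 * m) + (0 * - (s0 * m) + (1 * (s0 * q) + 0)) +
     (0 * (s0 * w2) + 0)) * A1) +
   A1 * ((alpha * - (s0 * m) + (w ^+ 2 * s0 + (0 * - (s0 * m) + 0)) +
     (- w ^+ 2 * 0 + 0)) * A0 +
    (alpha * (s0 * q) + (w ^+ 2 * - (s0 * m) + (0 * (s0 * q) + 0)) +
     (- w ^+ 2 * (s0 * w2) + 0)) * A1) +
   ((A0 * (0 * (1 - s0 - 1) + 0) +
     (A1 * (- w ^+ 2 * (1 - s0 - 1) + 0) + 0)) * Z + 0) +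
   ((Z * (0 + 0) + 0) * A0 +
    ((Z * (s0 * w2 + s0 * y) + 0) * A1 + 0)) +
   ((Z * (1 - s0 - 1) + 0) * Z + 0))
      = - s0 * ((A0 - e * A1) ^+ 2 + (A0 ^+ 2 + A1 ^+ 2 + Z ^+ 2) + Z ^+ 2).
      by rewrite /y /w2 /e /m; field; rewrite gt_eqF.
    rewrite mulNr oppr_lt0; apply: mulr_gt0 => //.
    have := sqr_ge0 (A0 - e * A1); have := sqr_ge0 Z; lra.
  apply: key.
  have s1 := sqr_ge0 (v1 0 0); have s2 := sqr_ge0 (v1 1 0); have s3 := sqr_ge0 (v2 0 0).
  case/orP: hnz => hn.
  + case: (@cV2_nz _ _ hn) => hn'.
    * have : 0 < v1 0 0 ^+ 2 by rewrite exprn_even_gt0.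
      lra.
    * have : 0 < v1 1 0 ^+ 2 by rewrite exprn_even_gt0.
      lra.
  + have : 0 < v2 0 0 ^+ 2 by rewrite exprn_even_gt0 // cV1_nz.
    lra.
- move=> v.
  rewrite -(vsubmxK v) quad_block quad2.
  move: (usubmx v) (dsubmx v) => v1 v2.
  rewrite !mxE !big_ord_recl !big_ord0 !mxE !big_ord_recl !big_ord0 !mxE /=.
  rewrite ?big_ord_recl ?big_ord0 ?mxE /= ?eqxx /=.
  have i0 : (ord0 : 'I_2) = 0 by apply/val_inj.
  have i1 : (lift ord0 (ord0 : 'I_1)) = 1 :> 'I_2 by apply/val_inj.
  have i00 : (ord0 : 'I_1) = 0 by apply/val_inj.
  rewrite ?i0 ?i1 ?i00 ?mulr1n.
  move: (v1 0 0) (v2 0 0) (v2 1 0) => Z A0 A1.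
  have hu2 : 0 < ubar ^+ 2 by apply: exprn_gt0.
  have hy1 : y ^+ 2 + 1 != 0 by rewrite gt_eqF //; have := sqr_ge0 y; lra.
  have hqm : 0 <= q - m ^+ 2 - 1 by rewrite /q; lra.
  have eq2 : ubar ^+ 2 * ((Z * ubar ^+ 2 + 0) * Z + 0 +
    ((Z * 0 + 0) * A0 + ((Z * (s0 * y) + 0) * A1 + 0)) +
    ((A0 * 0 + (A1 * (s0 * y) + 0)) * Z + 0) +
    (A0 * (s0 * A0 + - (s0 * m) * A1) + A1 * (- (s0 * m) * A0 + s0 * q * A1)))
    = (ubar ^+ 2 * Z + s0 * y * A1) ^+ 2 + s0 ^+ 2 * A1 ^+ 2
      + ubar ^+ 2 * s0 * (A0 - m * A1) ^+ 2 + ubar ^+ 2 * s0 * (q - m ^+ 2 - 1) * A1 ^+ 2.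
    by rewrite /s0; field.
  have : 0 <= ubar ^+ 2 * ((Z * ubar ^+ 2 + 0) * Z + 0 +
    ((Z * 0 + 0) * A0 + ((Z * (s0 * y) + 0) * A1 + 0)) +
    ((A0 * 0 + (A1 * (s0 * y) + 0)) * Z + 0) +
    (A0 * (s0 * A0 + - (s0 * m) * A1) + A1 * (- (s0 * m) * A0 + s0 * q * A1))).
    rewrite eq2; apply: addr_ge0; last first.
      by apply: mulr_ge0; [apply: mulr_ge0; [apply: mulr_ge0; lra | done] | apply: sqr_ge0].
    apply: addr_ge0; last by apply: mulr_ge0; [apply: mulr_ge0; lra | apply: sqr_ge0].
    by apply: addr_ge0; [apply: sqr_ge0 | apply: mulr_ge0; apply: sqr_ge0].
  by rewrite pmulr_rge0.
Qed.
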